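(* Let $l\in\mathbb{N}$ and for each $i\in\{1,\dots,l\}$ let $S_i$ be a countable adequate commutative partial semigroup and let $\langle y_{i,n}\rangle_{n=1}^{\infty}$ be an adequate sequence in $S_i$. Let $T=S_1\times\cdots\times S_l$ with coordinatewise partial operation, and let \[ \mathscr{L}=\Big\{p\in\delta T:\ \text{for each } A\in p \text{ and each } m,k\in\mathbb{N} \text{ there exists, for each } i\in\{1,\dots,l\}, \text{ a weak product subsystem } \langle x_{i,n}\rangle_{n=1}^{m} \text{ of } \langle y_{i,n}\rangle_{n=k}^{\infty} \text{ such that } FS(\langle x_{1,n}\rangle_{n=1}^{m})\times\cdots\times FS(\langle x_{l,n}\rangle_{n=1}^{m})\subseteq A\Big\}. \] Then $\mathscr{L}$ is a compact subsemigroup of $\delta T$.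
   Context: A partial semigroup $(S,+)$ is a set with a map $+$ from a subset of $S\times S$ to $S$ such that $(a+b)+c=a+(b+c)$ whenever either side is defined (then both are defined and equal); it is commutative if $a+b$ is defined iff $b+a$ is, and then they are equal. For $s\in S$, $\varphi(s)=\{t: s+t\text{ defined}\}$; for finite nonempty $H\subseteq S$, $\sigma(H)=\bigcap_{s\in H}\varphi(s)$; $S$ is adequate if all $\sigma(H)\ne\emptyset$. On $T=S_1\times\cdots\times S_l$, $\bar a+\bar b$ is defined iff $a_i+b_i$ is defined for every $i$, and then equals $(a_1+b_1,\dots,a_l+b_l)$. For a partial semigroup $S$: $\beta S$ is the space of ultrafilters on $S$ with basic open sets $\overline{A}=\{p: A\in p\}$; $\delta S=\bigcap_{x\in S}\overline{\varphi(x)}$; for $p,q\in\delta S$, $A\in p+q$ iff $\{x\in S: -x+A\in q\}\in p$, where $-x+A=\{y\in\varphi(x): x+y\in A\}$. A sequence $\langle y_n\rangle_{n=1}^\infty$ is adequate if all finite sums $\sum_{n\in F}y_n$ are defined and for every finite nonempty $H\subseteq S$ there is $m$ with all sums $\sum_{n\in F}y_n$, $F\subseteq\{m,m+1,\dots\}$ finite nonempty, lying in $\sigma(H)$. For $k,m\in\mathbb{N}$, $\langle x_n\rangle_{n=1}^{m}$ is a weak product subsystem of $\langle y_n\rangle_{n=k}^{\infty}$ if there are finite nonempty sets $H_1,\dots,H_m\subseteq\{k,k+1,\dots\}$, pairwise disjoint, with $x_n=\sum_{t\in H_n}y_t$ for each $n$. $FS(\langle x_n\rangle_{n=1}^{m})=\{\sum_{n\in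 F}x_n: \emptyset\ne F\subseteq\{1,\dots,m\}\}$. *)

(* Defs.v *)
From HB Require Import structures.
From mathcomp Require Import all_boot all_classical all_reals all_analysis.
Set Implicit Arguments. Unset Strict Implicit. Unset Printing Implicit Defensive.
Local Open Scope classical_set_scope.

(* A partial operation on S is modelled as op : S -> S -> option S,
   with op a b = None meaning "a + b is undefined". *)

Definition psg_assoc {S : Type} (op : S -> S -> option S) :=
  forall a b c : S,
    let lhs := obind (fun ab => op ab c) (op a b) in
    let rhs := obind (fun bc => op a bc) (op b c) in
    (lhs <> None \/ rhs <> None) -> lhs = rhs.

Definition psg_comm {S : Type} (op : S -> S -> option S) :=
  forall a b : S, (op a b <> None <-> op b a <> None) /\
                  (op a b <> None -> op a b = op b a).

Definition comm_psg {S : Type} (op : S -> S -> option S) :=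
  psg_assoc op /\ psg_comm op.

Definition phi {S : Type} (op : S -> S -> option S) (s : S) : set S :=
  [set t | op s t <> None].

Definition sigma {S : Type} (op : S -> S -> option S) (H : set S) : set S :=
  [set t | forall s, H s -> op s t <> None].

Definition adequate {S : Type} (op : S -> S -> option S) :=
  forall H : set S, finite_set H -> H !=set0 -> sigma op H !=set0.

Definition psum {S : Type} (op : S -> S -> option S) (s : seq S) : option S :=
  match s with
  | [::] => None
  | x :: r => foldl (fun acc y => obind (fun a => op a y) acc) (Some x) r
  end.

(* A finite nonempty subset F of {k, k+1, ...} of nat, represented by its
   strictly increasing enumeration. *)
Definition fin_ne_from (k : nat) (F : seq nat) : Prop :=
  [/\ sorted ltn F, F != [::] & all (leq k) F].

Definition Fsum {S : Type} (op : S -> S -> option S) (y : nat -> S)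
  (F : seq nat) : option S := psum op (map y F).

(* adequate sequence <y_n>_{n=1}^oo (the value y 0 is irrelevant) *)
Definition adequate_seq {S : Type} (op : S -> S -> option S) (y : nat -> S) :=
  (forall F, fin_ne_from 1 F -> Fsum op y F <> None) /\
  (forall H : set S, finite_set H -> H !=set0 ->
     exists m, 0 < m /\
       forall F, fin_ne_from m F ->
         exists s, Fsum op y F = Some s /\ sigma op H s).

Definition weak_product_subsystem {S : Type} (op : S -> S -> option S)
  (y : nat -> S) (k m : nat) (x : nat -> S) : Prop :=
  exists H : nat -> seq nat,
    [/\ (forall n, 1 <= n <= m -> fin_ne_from k (H n)),
        (forall n n', 1 <= n <= m -> 1 <= n' <= m -> n != n' ->
           forall t, t \in H n -> t \notin H n')
      & (forall n, 1 <= n <= m -> Fsum op y (H n) = Some (x n))].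

Definition FS {S : Type} (op : S -> S -> option S) (x : nat -> S) (m : nat)
  : set S :=
  [set s | exists F, [/\ fin_ne_from 1 F, all (fun n => n <= m) F
                       & Fsum op x F = Some s]].

Definition prodT (l : nat) (S : 'I_l -> Type) := forall i : 'I_l, S i.

Definition prod_op (l : nat) (S : 'I_l -> Type)
  (op : forall i, S i -> S i -> option (S i)) (a b : prodT S)
  : option (prodT S) :=
  if [forall i : 'I_l, isSome (op i (a i) (b i))]
  then Some (fun i => odflt (a i) (op i (a i) (b i)))
  else None.

Definition beta (X : Type) := {F : set_system X | UltraFilter F}.
HB.instance Definition _ X := gen_eqMixin (beta X).
HB.instance Definition _ X := gen_choiceMixin (beta X).

Definition bbase {X : Type} (A : set X) : set (beta X) :=
  [set p | proj1_sig p A].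

Lemma bbase_cover X : \bigcup_(i in [set: set X]) bbase i = [set: beta X].
Proof.
apply/seteqP; split => // p _; exists setT => //.
case: p => F UF /=; rewrite /bbase /=; exact: filterT.
Qed.

Lemma bbase_join X : forall (i j : set X) t, [set: set X] i -> [set: set X] j ->
  bbase i t -> bbase j t ->
  exists k, [/\ [set: set X] k, bbase k t & bbase k `<=` bbase i `&` bbase j].
Proof.
move=> i j [F UF] _ _ /= Fi Fj; exists (i `&` j); split => //.
  by rewrite /bbase /=; apply: filterI.
by move=> [G UG]; rewrite /bbase /= => Gij; split; apply: filterS Gij => x [].
Qed.

HB.instance Definition _ X :=
  isBaseTopological.Build (beta X) (@bbase_cover X) (@bbase_join X).

Definition deltaS {S : Type} (op : S -> S -> option S) : set (beta S) :=
  [set p | forall x : S, proj1_sig p (phi op x)].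

(* p + q :  A in p + q  iff  { x : -x + A in q } in p,
   where -x + A = { y in phi(x) : x + y in A } *)
Definition uf_add {S : Type} (op : S -> S -> option S)
  (p q : set_system S) : set_system S :=
  [set A | p [set x | q [set y | exists z, op x y = Some z /\ A z]]].

Definition scrL (l : nat) (S : 'I_l -> Type)
  (op : forall i, S i -> S i -> option (S i)) (y : forall i, nat -> S i)
  : set (beta (prodT S)) :=
  [set p | deltaS (prod_op op) p /\
     forall A : set (prodT S), proj1_sig p A ->
     forall m k : nat, 0 < m -> 0 < k ->
       exists x : forall i : 'I_l, nat -> S i,
         (forall i, weak_product_subsystem (op i) (y i) k m (x i)) /\
         [set t : prodT S | forall i, FS (op i) (x i) m (t i)] `<=` A].

Definition subsemigroup_delta {S : Type} (op : S -> S -> option S)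
  (K : set (beta S)) : Prop :=
  [/\ K !=set0, K `<=` deltaS op &
      forall p q, K p -> K q ->
        exists2 r, K r & proj1_sig r = uf_add op (proj1_sig p) (proj1_sig q)].

(* Main.v *)
Require Import Defs.
From HB Require Import structures.
From mathcomp Require Import all_boot all_classical all_reals all_analysis.
From mathcomp Require Import zify.
Local Open Scope classical_set_scope.

Module LemmaAux.
Set Implicit Arguments. Unset Strict Implicit.

Section BetaGen.
Variable X : Type.

Lemma mk_ultra (U : set_system X) :
  ~ U set0 -> U setT -> (forall A B, U A -> U B -> U (A `&` B)) ->
  (forall A B, A `<=` B -> U A -> U B) -> (forall A, U A \/ U (~` A)) ->
  UltraFilter U.
Proof.
move=> U0 UT UI US Uc.
have FU : Filter U by split; [exact: UT | exact: UI | exact: US].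
have PU : ProperFilter U by split.
split => // G PG UG; apply/seteqP; split => // A GA.
case: (Uc A) => // /UG GnA; exfalso.
have : G (A `&` ~` A) by exact: filterI.
by rewrite setICr; apply: filter_not_empty.
Qed.

Implicit Types p q : beta X.

Lemma bT p : proj1_sig p setT.
Proof. case: p => F UF /=; exact: filterT. Qed.
Lemma b0 p : ~ proj1_sig p set0.
Proof. case: p => F UF /=; exact: filter_not_empty. Qed.
Lemma bI p A B : proj1_sig p A -> proj1_sig p B -> proj1_sig p (A `&` B).
Proof. case: p => F UF /=; exact: filterI. Qed.
Lemma bS p (A B : set X) : A `<=` B -> proj1_sig p A -> proj1_sig p B.
Proof. case: p => F UF /=; exact: filterS. Qed.
Lemma bC p A : proj1_sig p A \/ proj1_sig p (~` A).
Proof. case: p => F UF /=; exact: in_ultra_setVsetC. Qed.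
Lemma bnC p A : proj1_sig p A -> ~ proj1_sig p (~` A).
Proof. move=> pA pnA; apply: (@b0 p); rewrite -(setICr A); exact: bI. Qed.
Lemma bex p A : proj1_sig p A -> exists x, A x.
Proof.
move=> pA; apply: contrapT => nA; apply: (@b0 p); apply: bS pA => x Ax.
by apply: nA; exists x.
Qed.

Lemma beta_eq p q : proj1_sig p `<=` proj1_sig q -> p = q.
Proof.
case: p => F UF; case: q => G UG /= FG.
have GF : G = F by apply: (@max_filter _ F UF G _ FG).
subst G; congr exist; exact: Prop_irrelevance.
Qed.

Lemma ultra_sub_eq (U V : set_system X) : UltraFilter U -> UltraFilter V ->
  U `<=` V -> V = U.
Proof. move=> UU UV UV'; exact: (@max_filter _ U UU V _ UV'). Qed.

Definition myclosed (C : set (beta X)) :=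
  forall p, (forall B, proj1_sig p B -> exists2 q, C q & proj1_sig q B) -> C p.

Lemma beta_cluster (F : set_system (beta X)) : ProperFilter F ->
  exists p : beta X, forall W B, F W -> proj1_sig p B ->
    exists2 q, W q & proj1_sig q B.
Proof.
move=> PF; have [G [UG FG]] := ultraFilterLemma PF.
pose U := [set B | G (bbase B)].
have UU : UltraFilter U.
  apply: mk_ultra.
  - rewrite /U => H; have H' : G (bbase set0) := H.
    apply: (@filter_not_empty _ G); apply: filterS H' => q.
    by move=> /b0.
  - change (G (bbase setT)); apply: filterS (filterT) => q _; exact: bT.
  - move=> A B GA GB; change (G (bbase (A `&` B))).
    have GA' : G (bbase A) := GA; have GB' : G (bbase B) := GB.
    apply: filterS (filterI GA' GB') => q []; exact: bI.
  - move=> A B AB GA; change (G (bbase B)); have GA' : G (bbase A) := GA.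
    apply: filterS GA' => q; exact: bS.
  - move=> A; case: (in_ultra_setVsetC (bbase A) UG); first by left.
    move=> H; right; change (G (bbase (~` A))); apply: filterS H => q nq.
    by case: (bC q A) => // qa; exfalso; apply: nq.
exists (exist _ U UU) => W B FW /= UB.
have : G (W `&` bbase B) by apply: filterI => //; exact: FG.
by move=> /filter_ex [q [Wq Bq]]; exists q.
Qed.

Lemma closed_compact (C : set (beta X)) : myclosed C -> compact C.
Proof.
move=> cC F PF FC; have [p hp] := beta_cluster PF.
have Cp : C p by apply: cC => B pB; exact: hp FC pB.
exists p; split => // A B FA.
rewrite nbhsE => -[U [oU Up] UB].
case: oU => D' _ eq; rewrite -eq in Up UB; case: Up => i Di bi.
have [q Aq qi] := hp _ _ FA bi.
exists q; split => //; apply: UB; by exists i.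
Qed.

End BetaGen.

Section OpGen.
Variable X : Type.
Variable op : X -> X -> option X.
Hypothesis opA : psg_assoc op.

Definition lop (a b : option X) : option X :=
  match a, b with Some x, Some y => op x y | _, _ => None end.

Lemma lopA a b c : lop (lop a b) c = lop a (lop b c).
Proof.
case: a => [x|] //; case: b => [y|] //=; try by case: c.
case: c => [z|] /=; last by case: (op x y).
have := @opA x y z; rewrite /=.
case E1: (op x y) => [u|]; case E2: (op y z) => [v|] //=.
- case: (op u z) => [w|]; case: (op x v) => [w'|] //= H;
  by apply: H; first [left; discriminate | right; discriminate].
- case: (op u z) => [w|] // H;
  by apply: H; first [left; discriminate | right; discriminate].
- case: (op x v) => [w'|] // H;
  by apply: H; first [left; discriminate | right; discriminate].
Qed.

Lemma psum1 a : psum op [:: a] = Some a. Proof. by []. Qed.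

Lemma psum_rcons (s : seq X) a : s <> [::] -> psum op (rcons s a) = lop (psum op s) (Some a).
Proof.
case: s => [|x s] //= _; rewrite foldl_rcons.
by case: (foldl _ _ s).
Qed.

Lemma psum_cat (s t : seq X) : s <> [::] -> t <> [::] ->
  psum op (s ++ t) = lop (psum op s) (psum op t).
Proof.
move=> sn; elim/last_ind: t => [|t a IH] // _.
rewrite -rcons_cat psum_rcons; last by case: (s) sn.
case: t IH => [|b t] IH; first by rewrite cats0.
by rewrite IH // psum_rcons // lopA.
Qed.

Lemma opA1 x y w z v : op x y = Some z -> op z w = Some v ->
  exists u, op y w = Some u /\ op x u = Some v.
Proof.
move=> e1 e2; have := @opA x y w; rewrite /obind /oapp /= e1 e2.
case: (op y w) => [u|] H.
- exists u; split => //; symmetry; apply: H; left; discriminate.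
- have h : Some v <> None by discriminate.
  by have := H (or_introl h).
Qed.

Lemma opA2 x y w u v : op y w = Some u -> op x u = Some v ->
  exists z, op x y = Some z /\ op z w = Some v.
Proof.
move=> e1 e2; have := @opA x y w; rewrite /obind /oapp /= e1 e2.
case: (op x y) => [z|] H.
- exists z; split => //; apply: H; right; discriminate.
- have h : Some v <> None by discriminate.
  by have := H (or_intror h).
Qed.

Implicit Types p q r : beta X.

Lemma add_ultra p q : deltaS op q -> UltraFilter (uf_add op (proj1_sig p) (proj1_sig q)).
Proof.
move=> dq; apply: mk_ultra; rewrite /uf_add.
- move=> H; apply: (@b0 _ p); apply: bS H => x /= H; apply: (@b0 _ q).
  by apply: bS H => y [z [_ []]].
- apply: bS (bT p) => x _ /=; apply: bS (dq x) => y; rewrite /phi /=.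
  by case: (op x y) => [z _|/(_ erefl) //]; exists z.
- move=> A B HA HB; apply: bS (bI HA HB) => x [/= qA qB].
  apply: bS (bI qA qB) => y [[z [e Az]] [z' [e' Bz']]].
  exists z; split => //; split => //; congr (B _): Bz'; move: e'; rewrite e; by case.
- move=> A B AB; apply: bS => x /=; apply: bS => y [z [e Az]]; exists z; split => //.
  exact: AB.
- move=> A; case: (bC p [set x | proj1_sig q [set y | exists z, op x y = Some z /\ A z]]).
    by left.
  move=> H; right; apply: bS H => x /= nq.
  case: (bC q [set y | exists z, op x y = Some z /\ A z]) => // H.
  apply: bS (bI H (dq x)) => y [/= nA]; rewrite /phi /= => px.
  case E: (op x y) px => [z|] // _; exists z; split => // Az; apply: nA.
  by exists z.
Qed.

Lemma add_delta p q : deltaS op p -> deltaS op q ->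
  forall x, uf_add op (proj1_sig p) (proj1_sig q) (phi op x).
Proof.
move=> dp dq x; rewrite /uf_add; apply: bS (dp x) => a; rewrite /phi /= => xa.
case E: (op x a) xa => [c|] // _.
apply: bS (dq c) => b /= cb.
have := @opA x a b; rewrite /= E.
case E2: (op a b) => [z|] /=; last by move=> /(_ (or_introl cb)).
move=> H; exists z; split => //; rewrite -H //; by left.
Qed.

Lemma add_assoc p q r : deltaS op q ->
  uf_add op (uf_add op (proj1_sig p) (proj1_sig q)) (proj1_sig r) =
  uf_add op (proj1_sig p) (uf_add op (proj1_sig q) (proj1_sig r)).
Proof.
move=> dq; apply/funext => A; apply/propext; rewrite /uf_add; split.
- apply: bS => x /=; move=> H; apply: bS H => y [z [e H]].
  apply: bS H => w [v [e2 Av]].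
  have [u [e3 e4]] := opA1 e e2.
  by exists u; split => //; exists v.
- apply: bS => x /= H; apply: bS (bI H (dq x)) => y [/= H1]; rewrite /phi /= => H2.
  case E: (op x y) H2 => [z|] H2; last by exfalso; apply: H2.
  exists z; split => //.
  apply: bS H1 => w [u [e1 [v [e2 Av]]]].
  have [z' [e3 e4]] := opA2 e1 e2.
  move: e3; rewrite E => -[ez]; subst z'; by exists v.
Qed.

End OpGen.

Lemma fin_mono k k' F : k <= k' -> fin_ne_from k' F -> fin_ne_from k F.
Proof.
move=> kk [sF nF aF]; split => //; apply: sub_all aF => t; exact: leq_trans.
Qed.

Lemma sorted_cat_ltn M (F G : seq nat) : sorted ltn F -> sorted ltn G ->
  all (fun t => t < M) F -> all (leq M) G -> sorted ltn (F ++ G).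
Proof.
move=> sF sG aF aG; rewrite sorted_pairwise; last exact: ltn_trans.
rewrite pairwise_cat -!sorted_pairwise ?sF ?sG ?andbT //; try exact: ltn_trans.
apply/allrelP => a b aF' bG.
by apply: (leq_trans (allP aF a aF')); apply: (allP aG b bG).
Qed.

Lemma fin_cat k M F G : fin_ne_from k F -> fin_ne_from M G -> k <= M ->
  all (fun t => t < M) F -> fin_ne_from k (F ++ G).
Proof.
move=> [sF nF aF] [sG nG aG] kM aFM; split.
- exact: sorted_cat_ltn aFM aG.
- by case: (F) nF.
- rewrite all_cat aF /=; apply: sub_all aG => t; exact: leq_trans.
Qed.

Definition bnd k (F : seq nat) := (foldr maxn k F).+1.

Lemma bnd_all k F : all (fun t => t < bnd k F) F.
Proof.
rewrite /bnd; elim: F => //= a F IH; rewrite ltnS leq_maxl /=.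
apply: sub_all IH => t; rewrite !ltnS => h; apply: leq_trans h _; exact: leq_maxr.
Qed.

Lemma bnd_ge k F : k < bnd k F.
Proof.
rewrite /bnd ltnS; elim: F => //= a F IH; apply: leq_trans IH _; exact: leq_maxr.
Qed.

Section Ellis.
Variable S : Type.
Variable op : S -> S -> option S.
Hypothesis opA : psg_assoc op.
Variable y : nat -> S.
Hypothesis hy : adequate_seq op y.

Definition FSk k := [set s | exists F, fin_ne_from k F /\ Fsum op y F = Some s].

Lemma FSk_mono k k' : k <= k' -> FSk k' `<=` FSk k.
Proof. move=> kk s [F [hF e]]; exists F; split => //; exact: fin_mono hF. Qed.

Lemma FSk_ne k : FSk k (y k).
Proof. exists [:: k]; split => //; split => //=; by rewrite leqnn. Qed.

Lemma FSk_delta x : exists k, 0 < k /\ FSk k `<=` phi op x.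
Proof.
have [m [m0 hm]] := hy.2 [set x] (finite_set1 x) (ex_intro _ x erefl).
exists m; split => // s [F [hF e]].
have [s' [e' hs']] := hm F hF; rewrite e in e'; case: e' => es; subst s'.
exact: hs'.
Qed.

Lemma FS_add k x : 0 < k -> FSk k x ->
  exists M, FSk M `<=` [set z | exists w, op x z = Some w /\ FSk k w].
Proof.
move=> k0 [F [hF e]]; exists (bnd k F) => z [G [hG e2]].
have hFG : fin_ne_from k (F ++ G).
  apply: fin_cat hF hG _ (bnd_all k F); exact: ltnW (bnd_ge k F).
have := hy.1 (F ++ G) (fin_mono k0 hFG).
rewrite /Fsum map_cat psum_cat //; last 2 first.
- by case: hF => _; case: (F).
- by case: hG => _; case: (G).
rewrite -/(Fsum op y F) -/(Fsum op y G) e e2 /=.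
case E: (op x z) => [w|] // _; exists w; split => //; exists (F ++ G); split => //.
rewrite /Fsum map_cat psum_cat //; last 2 first.
- by case: hF => _; case: (F).
- by case: hG => _; case: (G).
by rewrite -/(Fsum op y F) -/(Fsum op y G) e e2 /=.
Qed.


Implicit Types p q r : beta S.

Definition Kset := [set p : beta S | forall k, 0 < k -> proj1_sig p (FSk k)].

Lemma K_delta p : Kset p -> deltaS op p.
Proof.
move=> Kp x; have [k [k0 hk]] := FSk_delta x; apply: bS (Kp k k0); exact: hk.
Qed.

Lemma add_ex p q : deltaS op q ->
  exists r : beta S, proj1_sig r = uf_add op (proj1_sig p) (proj1_sig q).
Proof. move=> dq; by exists (exist _ _ (add_ultra p dq)). Qed.

Lemma add_C p q A : deltaS op q -> uf_add op (proj1_sig p) (proj1_sig q) A \/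
  uf_add op (proj1_sig p) (proj1_sig q) (~` A).
Proof. move=> dq; have [r <-] := add_ex p dq; exact: bC. Qed.

Lemma add_nC p q A : deltaS op q -> uf_add op (proj1_sig p) (proj1_sig q) A ->
  ~ uf_add op (proj1_sig p) (proj1_sig q) (~` A).
Proof. move=> dq; have [r <-] := add_ex p dq; exact: bnC. Qed.

Lemma add_S p q (A B : set S) : A `<=` B -> uf_add op (proj1_sig p) (proj1_sig q) A ->
  uf_add op (proj1_sig p) (proj1_sig q) B.
Proof.
move=> AB; rewrite /uf_add; apply: bS => x; apply: bS => z [w [e Aw]].
by exists w; split => //; apply: AB.
Qed.

Definition semig (C : set (beta S)) := forall p q, C p -> C q ->
  exists2 r, C r & proj1_sig r = uf_add op (proj1_sig p) (proj1_sig q).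

Definition good (C : set (beta S)) :=
  [/\ C !=set0, C `<=` Kset, myclosed C & semig C].

Lemma semig_in C p q r : semig C -> C p -> C q ->
  proj1_sig r = uf_add op (proj1_sig p) (proj1_sig q) -> C r.
Proof.
move=> sC Cp Cq e; have [r' Cr' e'] := sC p q Cp Cq.
have -> : r = r' by apply: beta_eq; rewrite e e'.
exact: Cr'.
Qed.

Lemma closed_fam (I : Type) (P : I -> Prop) (B : I -> set S) :
  myclosed [set p : beta S | forall i, P i -> proj1_sig p (B i)].
Proof.
move=> p hp i Pi; case: (bC p (B i)) => // H.
have [q hq qn] := hp _ H; exfalso; exact: bnC (hq i Pi) qn.
Qed.

Lemma K_good : good Kset.
Proof.
split.
- pose Fb := [set B : set S | exists k, 0 < k /\ FSk k `<=` B].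
  have PF : ProperFilter Fb.
    split.
    + move=> [k [k0 hk]]; have := hk _ (FSk_ne k); by [].
    + split.
      * by exists 1.
      * move=> A B [k1 [k10 h1]] [k2 [k20 h2]]; exists (maxn k1 k2).
        split; first by rewrite leq_max k10.
        move=> s hs; split; [apply: h1|apply: h2]; apply: FSk_mono hs.
        exact: leq_maxl. exact: leq_maxr.
      * move=> A B AB [k [k0 hk]]; exists k; split => //; exact: subset_trans AB.
  have [G [UG FG]] := ultraFilterLemma PF.
  exists (exist _ G UG) => k k0 /=; apply: FG; by exists k; split.
- by [].
- exact: closed_fam.
- move=> p q Kp Kq; have [r er] := add_ex p (K_delta Kq).
  exists r => // k k0; rewrite er /uf_add; apply: bS (Kp k k0) => x hx.
  have [M hM] := FS_add k0 hx.
  apply: bS (Kq _ (leq_trans k0 (leq_maxl k M))) => z hz.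
  apply: hM; apply: FSk_mono hz; exact: leq_maxr.
Qed.


Lemma chain_good (A : set {C : set (beta S) | good C}) :
  (forall s t, A s -> A t -> proj1_sig s `<=` proj1_sig t \/ proj1_sig t `<=` proj1_sig s) ->
  A !=set0 -> good [set p | forall s, A s -> proj1_sig s p].
Proof.
move=> tot [s0 As0].
have g0 := proj2_sig s0; case: g0 => ne0 K0 cl0 sg0.
split.
- pose Fc := [set W : set (beta S) | exists2 s, A s & proj1_sig s `<=` W].
  have PF : ProperFilter Fc.
    split.
    + move=> [s As sW]; have [[p sp] _ _ _] := proj2_sig s; exact: sW p sp.
    + split.
      * by exists s0.
      * move=> W1 W2 [s1 As1 h1] [s2 As2 h2].
        case: (tot _ _ As1 As2) => h.
        - exists s1 => // p sp; split; [exact: h1|apply: h2; exact: h].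
        - exists s2 => // p sp; split; [apply: h1; exact: h|exact: h2].
      * move=> W1 W2 W12 [s As h]; exists s => //; exact: subset_trans W12.
  have [p0 hp0] := beta_cluster PF.
  exists p0 => s As; have [_ _ cl _] := proj2_sig s; apply: cl => B pB.
  apply: hp0 => //; by exists s.
- move=> p hp; exact: K0 (hp _ As0).
- move=> p hp s As; have [_ _ cl _] := proj2_sig s; apply: cl => B pB.
  have [q hq qB] := hp B pB; exists q => //; exact: hq.
- move=> p q hp hq; have [r r0 er] := sg0 p q (hp _ As0) (hq _ As0).
  exists r => // s As; have [_ _ _ sg] := proj2_sig s.
  exact: semig_in sg (hp _ As) (hq _ As) er.
Qed.

Lemma exists_min_good : exists M, good M /\ forall C, good C -> C `<=` M -> M `<=` C.
Proof.
pose T := {C : set (beta S) | good C}.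
pose R := fun A B : T => `[< proj1_sig B `<=` proj1_sig A >].
have h1 : forall t, R t t by move=> t; apply/asboolP.
have h2 : forall a b c : T, R a b -> R b c -> R a c.
  move=> a b c /asboolP k1 /asboolP k2; apply/asboolP; exact: subset_trans k2 k1.
have h3 : forall A, total_on A R -> exists t, forall s, A s -> R s t.
  move=> A tot; case: (pselect (A !=set0)) => [An|A0].
    have tot' : forall s t, A s -> A t ->
        proj1_sig s `<=` proj1_sig t \/ proj1_sig t `<=` proj1_sig s.
      move=> s t As At; case: (tot s t As At) => /asboolP h; [right|left]; exact: h.
    exists (exist _ _ (chain_good tot' An)) => s As; apply/asboolP => p /= hp.
    exact: hp.
  exists (exist _ _ K_good) => s As; exfalso; apply: A0; by exists s.
have [M HM] := @ZL_preorder T (exist _ _ K_good) R h1 h2 h3.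
exists (proj1_sig M); split; first exact: proj2_sig M.
move=> C gC CM; have := HM (exist _ C gC); rewrite /R /=.
by move=> /(_ (asboolT CM)) /asboolP.
Qed.


Lemma exists_idem : exists e : beta S,
  Kset e /\ uf_add op (proj1_sig e) (proj1_sig e) = proj1_sig e.
Proof.
have [M [[[e Me] MK Mcl Msg] Mmin]] := exists_min_good.
have de := K_delta (MK e Me).
pose Me' := [set r : beta S | exists2 p, M p & proj1_sig r = uf_add op (proj1_sig p) (proj1_sig e)].
have sub : Me' `<=` M by move=> r [p Mp er]; exact: semig_in Msg Mp Me er.
have gMe : good Me'.
  split.
  - have [r er] := add_ex e de; exists r; by exists e.
  - exact: subset_trans sub MK.
  - move=> r hr.
    pose Fc := [set W : set (beta S) | exists C, proj1_sig r C /\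
       [set p | M p /\ uf_add op (proj1_sig p) (proj1_sig e) C] `<=` W].
    have PF : ProperFilter Fc.
      split.
      + move=> [C [rC sub0]]; have [s [p Mp es] sC] := hr C rC.
        apply: (sub0 p); split => //; by rewrite -es.
      + split.
        * exists setT; split; [exact: bT | done].
        * move=> W1 W2 [C1 [r1 h1]] [C2 [r2 h2]]; exists (C1 `&` C2); split.
            exact: bI.
          move=> p [Mp hp]; split; [apply: h1 | apply: h2]; split => //;
            apply: add_S hp; by move=> ? [].
        * move=> W1 W2 W12 [C [rC h]]; exists C; split => //; exact: subset_trans W12.
    have [p0 hp0] := beta_cluster PF.
    have Mp0 : M p0.
      apply: Mcl => D pD.
      have [q [Mq _] qD] := hp0 [set p | M p /\ uf_add op (proj1_sig p) (proj1_sig e) setT] D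
        (ex_intro _ setT (conj (bT r) (fun _ h => h))) pD.
      by exists q.
    exists p0 => //; symmetry.
    apply: ultra_sub_eq (proj2_sig r) (add_ultra p0 de) _.
    move=> C rC; case: (add_C p0 C de) => // hn; exfalso.
    rewrite /uf_add in hn.
    have [q [Mq qC] qD] := hp0 [set p | M p /\ uf_add op (proj1_sig p) (proj1_sig e) C] _
      (ex_intro _ C (conj rC (fun _ h => h))) hn.
    exact: add_nC qC qD.
  - move=> r1 r2 [p1 Mp1 e1] [p2 Mp2 e2].
    have Mr1 : M r1 by apply: sub; exists p1.
    have dp2 := K_delta (MK _ Mp2).
    have [s Ms es] := Msg r1 p2 Mr1 Mp2.
    have [r3 e3] := add_ex s de.
    exists r3; first by exists s.
    by rewrite e3 es e2 add_assoc.
have MMe := Mmin _ gMe sub.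
have [p0 Mp0 ep0] := MMe e Me.
pose B := [set p | M p /\ uf_add op (proj1_sig p) (proj1_sig e) = proj1_sig e].
have gB : good B.
  split.
  - by exists p0; split.
  - by move=> p [Mp _]; exact: MK.
  - move=> p hp.
    have Mp : M p by apply: Mcl => D pD; have [q [Mq _] qD] := hp D pD; exists q.
    split => //.
    apply: ultra_sub_eq (proj2_sig e) (add_ultra p de) _.
    move=> C eC; case: (add_C p C de) => // hn; exfalso.
    rewrite /uf_add in hn.
    have [q [Mq qe] qD] := hp _ hn.
    have : uf_add op (proj1_sig q) (proj1_sig e) (~` C) := qD.
    rewrite qe => h; exact: bnC eC h.
  - move=> p q [Mp pe] [Mq qe]; have [r Mr er] := Msg p q Mp Mq.
    exists r => //; split => //.
    have dq := K_delta (MK _ Mq).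
    by rewrite er add_assoc // qe pe.
have := Mmin _ gB (fun p => @proj1 _ _) e Me.
move=> [_ ee]; exists e; split => //; exact: MK.
Qed.

End Ellis.

Lemma split_last n (F : seq nat) : sorted ltn F -> all (fun t => 0 < t <= n.+1) F ->
  all (fun t => 0 < t <= n) F \/
  exists F', [/\ F = rcons F' n.+1, sorted ltn F' & all (fun t => 0 < t <= n) F'].
Proof.
case/lastP: F => [|F a]; first by left.
move=> sF aF.
have aFa : all (fun t => t < a) F.
  move: sF; rewrite -cats1 sorted_pairwise; last exact: ltn_trans.
  rewrite pairwise_cat /= andbT => /andP [H _]; move: H.
  by rewrite allrel1r.
have sF' : sorted ltn F.
  move: sF; rewrite -cats1 => /cat_sorted2 []; by [].
move: aF; rewrite all_rcons => /andP [ha aF].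
case: (a =P n.+1) => [ea|na].
  right; exists F; split => //; first by rewrite ea.
  apply/allP => t tF; have := allP aF t tF; have := allP aFa t tF.
  by rewrite ea ltnS => h /andP [-> _].
left; rewrite all_rcons.
have an : a <= n.
  by move: ha => /andP [_]; rewrite leq_eqVlt => /orP [/eqP //|]; rewrite ltnS.
rewrite an andbT; apply/andP; split; first by case/andP: ha.
apply/allP => t tF; have := allP aF t tF; have := allP aFa t tF.
move=> ta /andP [-> _] /=; exact: leq_trans (ltnW ta) an.
Qed.

Section GG.
Variable S : Type.
Variable op : S -> S -> option S.
Hypothesis opA : psg_assoc op.
Variable y : nat -> S.
Hypothesis hy : adequate_seq op y.
Variable e : beta S.
Hypothesis Ke : Kset op y e.
Hypothesis ee : uf_add op (proj1_sig e) (proj1_sig e) = proj1_sig e.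

Definition mB b (B : set S) := [set c | exists w, op b c = Some w /\ B w].
Definition star (B : set S) := forall b, B b -> proj1_sig e (mB b B).

Let de : deltaS op e := K_delta hy Ke.

Lemma psum_pair (s : seq S) a b w : op a b = Some w ->
  psum op (s ++ [:: a; b]) = psum op (s ++ [:: w]).
Proof.
move=> ew; case: s => [|c s].
  by rewrite /= /obind /oapp ew.
rewrite psum_cat // psum_cat //.
by rewrite /= /obind /oapp ew.
Qed.

Lemma star_of A : proj1_sig e A -> exists B, [/\ B `<=` A, proj1_sig e B & star B].
Proof.
move=> eA.
have eA2 : uf_add op (proj1_sig e) (proj1_sig e) A by rewrite ee.
exists (A `&` [set a | proj1_sig e (mB a A)]); split.
- by move=> ? [].
- exact: bI eA eA2.
- move=> b [Ab eb].
  have e3 : uf_add op (proj1_sig e) (proj1_sig e) (mB b A) by rewrite ee.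
  apply: bS (bI eb (bI (de b) e3)).
  move=> c [[w [e1 Aw]] [pc H]].
  exists w; split => //; split => //.
  apply: bS H => d [u' [e4 [v [e5 Av]]]].
  have [z [e6 e7]] := opA2 opA e4 e5.
  move: e6; rewrite e1 => -[ez]; subst z.
  by exists v.
Qed.

Lemma star_step B x : star B -> B x ->
  star (B `&` mB x B) /\ (proj1_sig e B -> proj1_sig e (B `&` mB x B)).
Proof.
move=> sB Bx; split; last by move=> eB; exact: bI eB (sB x Bx).
move=> c [Bc [w [e1 Bw]]].
apply: bS (bI (sB c Bc) (sB w Bw)) => d [[u [e2 Bu]] [v [e3 Bv]]].
exists u; split => //; split => //.
have [u' [e4 e5]] := opA1 opA e1 e3.
move: e4; rewrite e2 => -[eu]; subst u'.
by exists v.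
Qed.

Definition Inv (A : set S) (k n : nat) (x : nat -> S) (H : nat -> seq nat)
  (K : nat) (B : set S) :=
 [/\ (forall j, 0 < j <= n -> fin_ne_from k (H j) /\ Fsum op y (H j) = Some (x j)),
     (forall j j', 0 < j -> j < j' -> j' <= n -> forall t t', t \in H j -> t' \in H j' -> t < t'),
     (forall j, 0 < j <= n -> all (fun t => t < K) (H j)) /\ k <= K,
     [/\ B `<=` A, proj1_sig e B & star B] &
     (forall F, sorted ltn F -> all (fun t => 0 < t <= n) F -> forall b, B b ->
        exists v, psum op (map x F ++ [:: b]) = Some v /\ A v) /\
     (forall F, sorted ltn F -> F <> [::] -> all (fun t => 0 < t <= n) F ->
        forall v, psum op (map x F) = Some v -> A v)].

Lemma build A k n : proj1_sig e A -> 0 < k -> exists x H K B, Inv A k n x H K B.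
Proof.
move=> eA k0; elim: n => [|n [x [H [K [B [I1 I2 [I3 kK] [BA eB sB] [I5 I6]]]]]]].
  have [B [BA eB sB]] := star_of eA.
  exists y, (fun _ => [::]), k, B; split; last split.
  - by move=> j /andP [j0]; rewrite leqn0 => /eqP j00; rewrite j00 in j0.
  - by move=> j j' j0 jj; rewrite leqn0 => /eqP j00; rewrite j00 in jj.
  - split => // j /andP [j0]; rewrite leqn0 => /eqP j00; by rewrite j00 in j0.
  - by split.
  - case => [|a F] /= _; first by move=> _ b Bb; exists b; split => //; exact: BA.
    by case/andP => /andP [a0]; rewrite leqn0 => /eqP a00; rewrite a00 in a0.
  - case => [|a F] //= _ _ /andP [/andP [a0]].
    by rewrite leqn0 => /eqP a00; rewrite a00 in a0.
have K0 : 0 < K by apply: leq_trans k0 kK.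
have [xn [Bxn [G [hG eG]]]] := bex (bI eB (Ke K0)).
pose x' := fun j => if j == n.+1 then xn else x j.
pose H' := fun j => if j == n.+1 then G else H j.
have mapE : forall F, all (fun t => 0 < t <= n) F -> map x' F = map x F.
  move=> F aF; apply/eq_in_map => t tF; rewrite /x'.
  have := allP aF t tF => /andP [_ tn].
  by rewrite (ltn_eqF (leq_ltn_trans tn (ltnSn n))).
have [sB' eB'] := star_step sB Bxn.
exists x', H', (bnd K G), (B `&` mB xn B); split.
- move=> j /andP [j0 jn]; rewrite /x' /H'; case: (j =P n.+1) => [_|/eqP jn'].
    split => //; apply: fin_mono hG; exact: kK.
  apply: I1; rewrite j0 /=; by rewrite leq_eqVlt (negbTE jn') ltnS in jn.
- move=> j j' j0 jj' j'n t t' tH t'H; move: tH t'H; rewrite /H'.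
  have jn : j != n.+1 by rewrite neq_ltn (leq_trans jj' j'n).
  rewrite (negbTE jn).
  case: (j' =P n.+1) => [_|/eqP jn'] tH t'H.
    have jn0 : 0 < j <= n by rewrite j0 /= -ltnS (leq_trans jj' j'n).
    have tK : t < K := allP (I3 j jn0) t tH.
    case: hG => _ _ aG; have Kt' : K <= t' := allP aG t' t'H.
    exact: leq_trans tK Kt'.
  apply: I2 j0 jj' _ t t' tH t'H.
  by rewrite leq_eqVlt (negbTE jn') ltnS in j'n.
- split; last by apply: leq_trans kK (ltnW (bnd_ge K G)).
  move=> j /andP [j0 jn]; rewrite /H'; case: (j =P n.+1) => [_|/eqP jn'].
    exact: bnd_all.
  apply: sub_all (I3 j _) => [t tK|]; first exact: ltn_trans tK (bnd_ge K G).
  rewrite j0 /=; by rewrite leq_eqVlt (negbTE jn') ltnS in jn.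
- split => //; [move=> b [Bb _]; exact: BA | exact: eB'].
- split.
  + move=> F sF aF b [Bb [w [ew Bw]]].
    case: (split_last sF aF) => [aF'|[F' [-> sF' aF']]].
      rewrite mapE //; exact: I5.
    rewrite map_rcons /x' eqxx mapE // cat_rcons.
    rewrite (psum_pair _ ew); exact: I5.
  + move=> F sF Fn aF v ev.
    case: (split_last sF aF) => [aF'|[F' [eF sF' aF']]].
      rewrite mapE // in ev; exact: I6 ev.
    rewrite eF map_rcons /x' eqxx mapE // -cats1 in ev.
    have [v' [ev' Av']] := I5 F' sF' aF' xn Bxn.
    by rewrite ev in ev'; case: ev' => ->.
Qed.

Lemma GG A : proj1_sig e A -> forall m k, 0 < m -> 0 < k ->
  exists x : nat -> S, weak_product_subsystem op y k m x /\ FS op x m `<=` A.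
Proof.
move=> eA m k m0 k0.
have [x [H [K [B [I1 I2 [I3 kK] _ [_ I6]]]]]] := build m eA k0.
exists x; split.
- exists H; split.
  + by move=> j /I1 [].
  + move=> j j' /andP [j0 jm] /andP [j'0 j'm] jj t tH; apply/negP => tH'.
    case: (ltngtP j j') jj => // [jlt|jgt] _.
      by have := I2 j j' j0 jlt j'm t t tH tH'; rewrite ltnn.
    by have := I2 j' j j'0 jgt jm t t tH' tH; rewrite ltnn.
  + by move=> j /I1 [].
- move=> v [F [[sF nF aF] aFm ev]].
  apply: (I6 F sF) ev; first by case: (F) nF.
  apply/allP => t tF; by rewrite (allP aF t tF) (allP aFm t tF).
Qed.

End GG.

Lemma mask_of m (F : seq nat) : sorted ltn F -> all (fun t => 0 < t <= m) F ->
  exists b : m.-tuple bool, F = mask b (iota 1 m).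
Proof.
move=> sF aF.
have sub : subseq F (iota 1 m).
  have -> : F = [seq t <- iota 1 m | t \in F].
    apply: (@irr_sorted_eq _ ltn ltn_trans ltnn) => //.
    - apply: sorted_filter; [exact: ltn_trans | exact: iota_ltn_sorted].
    - move=> t; rewrite mem_filter mem_iota; case tF: (t \in F) => //=.
      by have := allP aF t tF; rewrite add1n ltnS.
  exact: filter_subseq.
case/subseqP: sub => b sb ->; rewrite size_iota in sb.
have sb' : size b == m by rewrite sb.
by exists (Tuple sb').
Qed.

Lemma mask_fin m (b : seq bool) : mask b (iota 1 m) <> [::] ->
  fin_ne_from 1 (mask b (iota 1 m)) /\ all (fun n => n <= m) (mask b (iota 1 m)).
Proof.
move=> ne; split; first split.
- apply: sorted_mask; [exact: ltn_trans | exact: iota_ltn_sorted].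
- by case: (mask _ _) ne.
- apply/allP => t /mem_mask; by rewrite mem_iota => /andP [].
- apply/allP => t /mem_mask; by rewrite mem_iota add1n ltnS => /andP [].
Qed.

Section Comm.
Variable X : Type.
Variable op : X -> X -> option X.
Hypothesis opA : psg_assoc op.
Hypothesis opC : psg_comm op.

Lemma lopC a b : lop op a b = lop op b a.
Proof.
case: a => [x|]; case: b => [z|] //=.
have [h1 h2] := opC x z.
case E: (op x z) => [u|]; first by rewrite -E h2 // E.
case E2: (op z x) => [v|] //; exfalso.
have : op z x <> None by rewrite E2.
by move/h1; rewrite E.
Qed.

Lemma lopACA a b c d : lop op (lop op a b) (lop op c d) = lop op (lop op a c) (lop op b d).
Proof.
rewrite !(lopA opA) -[lop op b (lop op c d)](lopA opA) (lopC b c).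
by rewrite (lopA opA).
Qed.

Lemma psum_split (x z w : nat -> X) (F : seq nat) : F <> [::] ->
  (forall n, n \in F -> op (x n) (z n) = Some (w n)) ->
  psum op (map w F) = lop op (psum op (map x F)) (psum op (map z F)).
Proof.
elim/last_ind: F => [|F a IH] // _ h.
have ha : op (x a) (z a) = Some (w a) by apply: h; rewrite mem_rcons in_cons eqxx.
case: F IH h => [|c F] IH h.
  by rewrite /= ha.
rewrite !map_rcons !psum_rcons // IH //; last first.
  by move=> n nF; apply: h; rewrite mem_rcons in_cons nF orbT.
by rewrite lopACA /= ha.
Qed.

End Comm.

Section ProdOp.
Variable L : nat.
Variable S : 'I_L -> Type.
Variable op : forall i, S i -> S i -> option (S i).
Arguments op : clear implicits.

Lemma prod_op_inv (a b c : prodT S) : prod_op op a b = Some c ->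
  forall i, op i (a i) (b i) = Some (c i).
Proof.
rewrite /prod_op; case: ifP => // /forallP H [<-] i.
by have := H i; case: (op i _ _).
Qed.

Lemma prod_op_eq (a b c : prodT S) : (forall i, op i (a i) (b i) = Some (c i)) ->
  prod_op op a b = Some c.
Proof.
move=> H; rewrite /prod_op.
have -> : [forall i, isSome (op i (a i) (b i))] by apply/forallP => i; rewrite H.
congr Some; apply: functional_extensionality_dep => i; by rewrite H.
Qed.

Lemma prod_op_def (a b : prodT S) : (forall i, op i (a i) (b i) <> None) ->
  exists c, prod_op op a b = Some c.
Proof.
move=> H; exists (fun i => odflt (a i) (op i (a i) (b i))); apply: prod_op_eq => i.
by case E: (op i _ _) (H i).
Qed.

Lemma prod_assoc : (forall i, psg_assoc (op i)) -> psg_assoc (prod_op op).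
Proof.
move=> hA a b c /=; rewrite /obind /oapp.
have L2R : forall v, match prod_op op a b with Some ab => prod_op op ab c | None => None end = Some v ->
    match prod_op op b c with Some bc => prod_op op a bc | None => None end = Some v.
  move=> v; case E1: (prod_op op a b) => [ab|] // E2.
  have h1 := prod_op_inv E1; have h2 := prod_op_inv E2.
  have [bc Ebc] : exists bc, prod_op op b c = Some bc.
    apply: prod_op_def => i; have [u [e3 _]] := opA1 (hA i) (h1 i) (h2 i); by rewrite e3.
  rewrite Ebc; apply: prod_op_eq => i.
  have [u [e3 e4]] := opA1 (hA i) (h1 i) (h2 i).
  move: (prod_op_inv Ebc i); rewrite e3 => -[eu]; by rewrite -eu.
have R2L : forall v, match prod_op op b c with Some bc => prod_op op a bc | None => None end = Some v ->
    match prod_op op a b with Some ab => prod_op op ab c | None => None end = Some v.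
  move=> v; case E1: (prod_op op b c) => [bc|] // E2.
  have h1 := prod_op_inv E1; have h2 := prod_op_inv E2.
  have [ab Eab] : exists ab, prod_op op a b = Some ab.
    apply: prod_op_def => i; have [u [e3 _]] := opA2 (hA i) (h1 i) (h2 i); by rewrite e3.
  rewrite Eab; apply: prod_op_eq => i.
  have [u [e3 e4]] := opA2 (hA i) (h1 i) (h2 i).
  move: (prod_op_inv Eab i); rewrite e3 => -[eu]; by rewrite -eu.
case El: (match prod_op op a b with Some ab => prod_op op ab c | None => None end) => [v|].
  by rewrite (L2R v El).
case Er: (match prod_op op b c with Some bc => prod_op op a bc | None => None end) => [v|].
  by rewrite (R2L v Er) in El.
by [].
Qed.

End ProdOp.

Section Upd.
Variable I : eqType.
Variable S : I -> Type.
Implicit Type f : forall i, S i.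

Definition upd f i (x : S i) : forall j, S j := @eqtype.dfwith I S f i x.
Arguments upd f [i] x j.

Lemma upd_in f i (x : S i) : upd f x i = x.
Proof. exact: eqtype.dfwith_in. Qed.
Lemma upd_out f i (x : S i) j : i != j -> upd f x j = f j.
Proof. exact: eqtype.dfwith_out. Qed.
Lemma updP f i (x : S i) j : eqtype.dfwith_spec f x (upd f x j).
Proof. exact: eqtype.dfwithP. Qed.

Lemma upd_comm f i1 i2 (a1 : S i1) (a2 : S i2) : i1 != i2 ->
  upd (upd f a1) a2 = upd (upd f a2) a1.
Proof.
move=> ne; apply: functional_extensionality_dep => j.
case: (updP (upd f a1) a2 j) => [|j' nj'].
  by rewrite upd_out // upd_in.
case: (updP f a1 j') nj' => [|j'' n''] nj'.
  by rewrite upd_in.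
by rewrite upd_out // upd_out.
Qed.

Lemma upd_same f i (a b : S i) : upd (upd f a) b = upd f b.
Proof.
apply: functional_extensionality_dep => j.
case: (updP (upd f a) b j) => [|j' nj']; first by rewrite upd_in.
by rewrite upd_out // upd_out.
Qed.

Lemma upd_self f i : upd f (f i) = f.
Proof.
apply: functional_extensionality_dep => j.
by case: (updP f (f i) j).
Qed.

End Upd.

Section Tensor.
Variable l' : nat.
Local Notation L := l'.+1.
Variable S : 'I_L -> Type.
Variable op : forall i, S i -> S i -> option (S i).
Arguments op : clear implicits.
Variable y : forall i, nat -> S i.
Variable e : forall i, beta (S i).
Hypothesis he : forall i, deltaS (op i) (e i).
Hypothesis hGG : forall i (A : set (S i)), proj1_sig (e i) A -> forall m k, 0 < m -> 0 < k ->
  exists x : nat -> S i, weak_product_subsystem (op i) (y i) k m x /\ FS (op i) x m `<=` A.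

Local Notation T := (prodT S).

Definition idx (n : nat) : 'I_L := inord (l' - n).

Lemma idxE n : (idx n : nat) = l' - n.
Proof. by rewrite /idx inordK // ltnS leq_subr. Qed.

Fixpoint Q (n : nat) (A : set T) (f : T) {struct n} : Prop :=
  match n with
  | 0 => A f
  | n'.+1 => proj1_sig (e (idx n')) [set a | Q n' A (upd f a)]
  end.

Lemma Q_S n (A B : set T) f : A `<=` B -> Q n A f -> Q n B f.
Proof.
move=> AB; elim: n f => [|n IH] f /=; first exact: AB.
apply: bS => a; exact: IH.
Qed.

Lemma Q_T n f : Q n setT f.
Proof. elim: n f => [|n IH] f //=; apply: bS (bT _) => a _; exact: IH. Qed.

Lemma Q_I n (A B : set T) f : Q n A f -> Q n B f -> Q n (A `&` B) f.
Proof.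
elim: n f => [|n IH] f //= h1 h2; apply: bS (bI h1 h2) => a [] /=; exact: IH.
Qed.

Lemma Q_C n (A : set T) f : Q n (~` A) f <-> ~ Q n A f.
Proof.
elim: n f => [|n IH] f //=; split.
- move=> h1 h2; have [a [/= a1 a2]] := bex (bI h1 h2).
  by move/IH: a1; apply.
- move=> h; case: (bC (e (idx n)) [set a | Q n A (upd f a)]) => // h'.
  apply: bS h' => a /= na; exact/IH.
Qed.

Lemma Q_0 n f : ~ Q n set0 f.
Proof.
move=> h; have [H _] := Q_C n setT f; rewrite setCT in H; exact: H h (Q_T n f).
Qed.

Lemma Q_forall (I : finType) (P : I -> set T) n f : (forall i, Q n (P i) f) ->
  Q n [set g | forall i, P i g] f.
Proof.
move=> h.
have : forall s : seq I, Q n [set g | forall i, i \in s -> P i g] f.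
  elim => [|i s IH].
    by apply: Q_S (Q_T n f) => g _ i.
  apply: Q_S (Q_I (h i) IH) => g [g1 g2] j; rewrite in_cons => /orP [/eqP -> //|].
  exact: g2.
move=> /(_ (enum I)); apply: Q_S => g g1 i; apply: g1; by rewrite mem_enum.
Qed.

Lemma Q_upd n (A : set T) f (j : 'I_L) (a : S j) : j < L - n ->
  (Q n [set g | A (upd g a)] f <-> Q n A (upd f a)).
Proof.
elim: n f => [|n IH] f //= jn.
have jc : j != idx n.
  apply/negP => /eqP E; move: jn; rewrite E idxE; lia.
have jn' : j < L - n by lia.
split; apply: bS => b /=.
- by move/IH => /(_ jn'); rewrite upd_comm // eq_sym.
- move=> h; apply/IH => //; by rewrite upd_comm // eq_sym.
Qed.

Lemma Q_prod n (Bs : forall i, set (S i)) f : (forall i, proj1_sig (e i) (Bs i)) ->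
  (forall i : 'I_L, i < L - n -> Bs i (f i)) -> Q n [set g | forall i, Bs i (g i)] f.
Proof.
move=> hB; elim: n f => [|n IH] f hf /=.
  move=> i; apply: hf; by rewrite subn0.
apply: bS (hB (idx n)) => b Bb /=; apply: IH => i hi.
case: (updP f b i) hi => [//|j nj hj].
apply: hf.
have : (idx n : nat) != j by [].
rewrite idxE; move: hj; lia.
Qed.

Lemma Q_GG m k : 0 < m -> 0 < k -> forall n, n <= L -> forall (A : set T) f, Q n A f ->
  exists x : forall i, nat -> S i,
    (forall i : 'I_L, L - n <= i -> weak_product_subsystem (op i) (y i) k m (x i)) /\
    forall g : T, (forall i : 'I_L, i < L - n -> g i = f i) ->
      (forall i : 'I_L, L - n <= i -> FS (op i) (x i) m (g i)) -> A g.
Proof.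
move=> m0 k0; elim => [|n IH] nL A f hQ.
  exists y; split => [i|g hg _]; first by rewrite subn0 leqNgt ltn_ord.
  have -> : g = f.
    apply: functional_extensionality_dep => i; apply: hg; by rewrite subn0.
  exact: hQ.
pose c := idx n.
have cE : (c : nat) = l' - n := idxE n.
have [xc [wc FSc]] := hGG hQ m0 k0.
pose A' := [set g : T | forall b : m.-tuple bool, forall a : S c,
  psum (op c) (map xc (mask b (iota 1 m))) = Some a -> A (upd g a)].
have QA' : Q n A' f.
  pose P := fun b : m.-tuple bool => [set g : T | forall a : S c,
    psum (op c) (map xc (mask b (iota 1 m))) = Some a -> A (upd g a)].
  suff hb : forall b, Q n (P b) f.
    by apply: (Q_S _ (@Q_forall _ P n f hb)) => g h b; exact: h.
  move=> b; rewrite /P; case E: (psum (op c) (map xc (mask b (iota 1 m)))) => [a0|]; last first.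
    by apply: (Q_S _ (Q_T n f)) => g _ a.
  have mne : mask b (iota 1 m) <> [::] by move=> h; rewrite h in E.
  have [hF hFm] := mask_fin mne.
  have : FS (op c) xc m a0 by exists (mask b (iota 1 m)); split.
  move/FSc => /= hq.
  have cn : c < L - n by rewrite cE; lia.
  move/(Q_upd A f a0 cn): hq => hq.
  apply: Q_S hq => g hg a [<-]; exact: hg.
have [x' [wx' hx']] := IH (ltnW nL) A' f QA'.
exists (@upd _ (fun i => nat -> S i) x' c xc); split.
  move=> i hi; case: (updP x' xc i) hi => [_|j nj hj]; first exact: wc.
  apply: wx'; move: nj hj; rewrite -(inj_eq val_inj) /= cE; lia.
move=> g hg hFS.
pose g' := upd g (f c).
have : A' g'.
  apply: hx' => i hi.
    rewrite /g'; case: (updP g (f c) i) hi => [//|j nj hj].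
    apply: hg; move: nj hj; rewrite -(inj_eq val_inj) /= cE; lia.
  have ci : c != i by rewrite -(inj_eq val_inj) /= cE; lia.
  rewrite /g' upd_out //.
  have := hFS i ltac:(lia); by rewrite upd_out.
have := hFS c ltac:(rewrite cE; lia); rewrite upd_in => -[F [[sF nF aF] aFm eF]].
have aF' : all (fun t => 0 < t <= m) F.
  apply/allP => t tF; by rewrite (allP aF t tF) (allP aFm t tF).
have [b eb] := mask_of sF aF'.
move=> /(_ b (g c)); rewrite -eb => /(_ eF).
by rewrite /g' upd_same upd_self.
Qed.

End Tensor.

Lemma b_forall (X : Type) (I : finType) (P : I -> set X) (p : beta X) :
  (forall i, proj1_sig p (P i)) -> proj1_sig p [set t | forall i, P i t].
Proof.
move=> h.
have : forall s : seq I, proj1_sig p [set t | forall i, i \in s -> P i t].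
  elim => [|i s IH]; first by apply: bS (bT p) => t _ i.
  apply: bS (bI (h i) IH) => t [t1 t2] j; rewrite in_cons => /orP [/eqP -> //|].
  exact: t2.
move=> /(_ (enum I)); apply: bS => t t1 i; apply: t1; by rewrite mem_enum.
Qed.

Section Final.
Variable l' : nat.
Local Notation L := l'.+1.
Variable S : 'I_L -> Type.
Variable op : forall i, S i -> S i -> option (S i).
Arguments op : clear implicits.
Variable y : forall i, nat -> S i.
Hypothesis opA : forall i, psg_assoc (op i).
Hypothesis opC : forall i, psg_comm (op i).
Hypothesis hy : forall i, adequate_seq (op i) (y i).
Arguments opA : clear implicits.
Arguments opC : clear implicits.
Arguments hy : clear implicits.

Lemma tensor_in : exists p : beta (prodT S), scrL op y p.
Proof.
pose e := fun i => proj1_sig (cid (exists_idem (opA i) (hy i))).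
have eK : forall i, Kset (op i) (y i) (e i) /\
    uf_add (op i) (proj1_sig (e i)) (proj1_sig (e i)) = proj1_sig (e i).
  move=> i; exact: proj2_sig (cid (exists_idem (opA i) (hy i))).
have he : forall i, deltaS (op i) (e i) := fun i => K_delta (hy i) (proj1 (eK i)).
have hGG : forall i (A : set (S i)), proj1_sig (e i) A -> forall m k, 0 < m -> 0 < k ->
    exists x : nat -> S i, weak_product_subsystem (op i) (y i) k m x /\ FS (op i) x m `<=` A.
  move=> i A eA m k m0 k0; exact: @GG _ _ (opA i) _ (hy i) (e i) (proj1 (eK i)) (proj2 (eK i)) A eA m k m0 k0.
pose f0 : prodT S := fun i => y i 0.
pose U := [set A : set (prodT S) | Q e L A f0].
have UU : UltraFilter U.
  apply: mk_ultra.
  - exact: Q_0.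
  - exact: Q_T.
  - move=> A B; exact: Q_I.
  - move=> A B AB; exact: Q_S.
  - move=> A; case: (pselect (Q e L A f0)) => h; [by left| right; exact/Q_C].
exists (exist _ U UU); split.
- move=> x /=.
  apply: (Q_S _ (@Q_prod _ _ e L (fun i => phi (op i) (x i)) f0 (fun i => he i (x i)) _)).
    move=> g hg; rewrite /phi /=; have [c ->] := prod_op_def hg; by [].
  by move=> i; rewrite subnn.
- move=> A /= hA m k m0 k0.
  have [x [wx hx]] := Q_GG hGG m0 k0 (leqnn L) hA.
  exists x; split.
    by move=> i; apply: wx; rewrite subnn.
  by move=> t ht; apply: hx => i; rewrite subnn.
Qed.

Lemma scrL_closed : myclosed (scrL op y).
Proof.
move=> p hp; split.
- move=> x; case: (bC p (phi (prod_op op) x)) => // h.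
  have [q [dq _] qn] := hp _ h; exfalso; exact: bnC (dq x) qn.
- move=> A pA m k m0 k0; have [q [_ hq] qA] := hp A pA; exact: hq A qA m k m0 k0.
Qed.

Lemma FS1 (X : Type) (o : X -> X -> option X) (x : nat -> X) m n : 0 < n <= m ->
  FS o x m (x n).
Proof.
move=> /andP [n0 nm]; exists [:: n]; split => //; first split => //=.
- exact/andP.
- exact/andP.
Qed.

Lemma scrL_add p q : scrL op y p -> scrL op y q ->
  exists2 r, scrL op y r &
    proj1_sig r = uf_add (prod_op op) (proj1_sig p) (proj1_sig q).
Proof.
move=> [dp hp] [dq hq].
have opT := prod_assoc opA.
have [r er] := add_ex p dq.
exists r => //; split.
  by move=> x; rewrite er; exact: (@add_delta _ _ opT p q dp dq x).
move=> A; rewrite er => hA m k m0 k0.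
have [x [wx hx]] := hp _ hA m k m0 k0.
have [Hs hHs] := choice wx.
pose M := k + \max_(i : 'I_L) \max_(n : 'I_m.+1) bnd k (Hs i n).
have hM : forall i n, 0 < n <= m -> all (fun t => t < M) (Hs i n).
  move=> i n /andP [_ nm]; apply: sub_all (bnd_all k (Hs i n)) => t ht.
  apply: leq_trans ht _; rewrite /M; apply: leq_trans (leq_addl k _).
  apply: leq_trans (leq_bigmax i).
  have nm' : n < m.+1 by rewrite ltnS.
  exact: (leq_bigmax (F := fun n : 'I_m.+1 => bnd k (Hs i n)) (Ordinal nm')).
have kM : k <= M := leq_addr _ _.
pose Y := [set t : prodT S | forall a : prodT S, (forall i, FS (op i) (x i) m (a i)) ->
  exists w, prod_op op a t = Some w /\ A w].
have qY : proj1_sig q Y.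
  pose P := fun bb : {ffun 'I_L -> m.-tuple bool} => [set t : prodT S | forall a : prodT S,
    (forall i, psum (op i) (map (x i) (mask (bb i) (iota 1 m))) = Some (a i)) ->
    exists w, prod_op op a t = Some w /\ A w].
  have hP : forall bb, proj1_sig q (P bb).
    move=> bb.
    case: (pselect (exists a : prodT S, forall i,
       psum (op i) (map (x i) (mask (bb i) (iota 1 m))) = Some (a i))) => [[a ha]|na].
    + have Xa : [set t : prodT S | forall i, FS (op i) (x i) m (t i)] a.
        move=> i; exists (mask (bb i) (iota 1 m)).
        have mne : mask (bb i) (iota 1 m) <> [::] by move=> h; move: (ha i); rewrite h.
        have [h1 h2] := mask_fin mne; split => //; exact: ha i.
      have := hx a Xa; apply: bS => t [w [ew Aw]] a' ha'.
      have -> : a' = a.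
        apply: functional_extensionality_dep => i.
        by move: (ha' i); rewrite ha => -[].
      by exists w.
    + apply: bS (bT q) => t _ a' ha'; exfalso; apply: na; by exists a'.
  have := b_forall hP; apply: bS => t ht a ha.
  have hb : forall i, exists b : m.-tuple bool,
      psum (op i) (map (x i) (mask b (iota 1 m))) = Some (a i).
    move=> i; have [F [[sF nF aF] aFm eF]] := ha i.
    have aF' : all (fun t => 0 < t <= m) F.
      apply/allP => u uF; by rewrite (allP aF u uF) (allP aFm u uF).
    have [b eb] := mask_of sF aF'; exists b; by rewrite -eb.
  have [bf hbf] := choice hb.
  apply: (ht [ffun i => bf i] a) => i; rewrite ffunE; exact: hbf.
have [z [wz hz]] := hq Y qY m M m0 (leq_trans k0 kM).
have [Gs hGs] := choice wz.
have hYp : forall a b : prodT S, (forall i, FS (op i) (x i) m (a i)) ->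
    (forall i, FS (op i) (z i) m (b i)) -> exists w, prod_op op a b = Some w /\ A w.
  move=> a b ha hb; exact: hz b hb a ha.
have hdef : forall i n, 0 < n <= m -> op i (x i n) (z i n) <> None.
  move=> i n hn.
  have [w [ew _]] := hYp (fun j => x j n) (fun j => z j n)
    (fun j => FS1 (op j) (x j) hn) (fun j => FS1 (op j) (z j) hn).
  by rewrite (prod_op_inv ew i).
pose w := fun i n => odflt (x i n) (op i (x i n) (z i n)).
have hw : forall i n, 0 < n <= m -> op i (x i n) (z i n) = Some (w i n).
  move=> i n hn; rewrite /w; by case E: (op i _ _) (hdef i n hn).
exists w; split.
- move=> i; exists (fun n => Hs i n ++ Gs i n).
  case: (hHs i) => h1 h2 h3; case: (hGs i) => g1 g2 g3; split.
  + move=> n hn; exact: fin_cat (h1 n hn) (g1 n hn) kM (hM i n hn).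
  + move=> n n' hn hn' nn' t; rewrite !mem_cat negb_or => /orP [tH|tG];
      apply/andP; split.
    * exact: (h2 n n' hn hn' nn' t tH).
    * apply/negP => tG'; have := allP (hM i n hn) t tH; case: (g1 n' hn') => _ _ aG.
      by have := allP aG t tG'; rewrite leqNgt => /negP.
    * apply/negP => tH'; have := allP (hM i n' hn') t tH'; case: (g1 n hn) => _ _ aG.
      by have := allP aG t tG; rewrite leqNgt => /negP.
    * exact: (g2 n n' hn hn' nn' t tG).
  + move=> n hn; rewrite /Fsum map_cat psum_cat //; last 2 first.
    * by case: (h1 n hn) => _; case: (Hs i n).
    * by case: (g1 n hn) => _; case: (Gs i n).
    rewrite -/(Fsum (op i) (y i) (Hs i n)) -/(Fsum (op i) (y i) (Gs i n)).
    by rewrite (h3 n hn) (g3 n hn) /=; exact: hw.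
- move=> t ht.
  have [Fs hFs] := choice ht.
  pose a := fun i => odflt (t i) (Fsum (op i) (x i) (Fs i)).
  pose b := fun i => odflt (t i) (Fsum (op i) (z i) (Fs i)).
  have key : forall i, [/\ Fsum (op i) (x i) (Fs i) = Some (a i),
      Fsum (op i) (z i) (Fs i) = Some (b i) & op i (a i) (b i) = Some (t i)].
    move=> i; case: (hFs i) => [[sF nF aF] aFm eF].
    have Fne : Fs i <> [::] by case: (Fs i) nF.
    have hin : forall n, n \in Fs i -> op i (x i n) (z i n) = Some (w i n).
      move=> n nF'; apply: hw; by rewrite (allP aF n nF') (allP aFm n nF').
    have e1 := psum_split (opA i) (opC i) Fne hin.
    rewrite /Fsum e1 in eF; rewrite /a /b /Fsum.
    move: eF; case: (psum _ (map (x i) _)) => [u|] //; case: (psum _ (map (z i) _)) => [v|] //.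
  have [w' [ew' Aw']] : exists w, prod_op op a b = Some w /\ A w.
    apply: hYp => i; case: (key i) => k1 k2 _; case: (hFs i) => hF aFm _;
      exists (Fs i); split => //.
  have -> : t = w'.
    apply: functional_extensionality_dep => i.
    by move: (prod_op_inv ew' i); case: (key i) => _ _ ->; case.
  exact: Aw'.
Qed.

End Final.

End LemmaAux.
Import LemmaAux.

Theorem lemma10 (l : nat) (S : 'I_l -> Type)
  (op : forall i, S i -> S i -> option (S i)) (y : forall i, nat -> S i) :
  0 < l ->
  (forall i, countable [set: S i]) ->
  (forall i, comm_psg (op i)) ->
  (forall i, adequate (op i)) ->
  (forall i, adequate_seq (op i) (y i)) ->
  compact (scrL op y) /\ subsemigroup_delta (prod_op op) (scrL op y).
Proof.
case: l S op y => [//|l'] S op y _ _ hc _ hy.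
have opA : forall i, psg_assoc (op i) := fun i => proj1 (hc i).
have opC : forall i, psg_comm (op i) := fun i => proj2 (hc i).
split.
- apply: closed_compact; exact: scrL_closed.
- split.
  + have [p hp] := tensor_in opA hy; by exists p.
  + by move=> p [].
  + move=> p q hp hq; exact: (@scrL_add _ _ _ _ opA opC p q hp hq).
Qed.
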